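(* Let $\mathcal{H}$ be a finite-dimensional Hilbert space, $H_0$ a Hermitian operator with ground energy $E_0$, ground-space projection $P_0$ and $Q_0=I-P_0$, and $V$ a Hermitian operator. Let $G=Q_0(E_0I-H_0)^{-1}Q_0$ (inverse taken on the range of $Q_0$). Let $L\geq 2$ be an integer such that for every $n<L$ and all choices $Z_1,\dots,Z_{n-1}\in\{P_0,Q_0\}\cup\{G^m: m\in\mathbb{N}\}$, one has $P_0VZ_1VZ_2\cdots Z_{n-1}VP_0\in\mathbb{C}P_0$ (equivalently, $P_0\Gamma(n)P_0\subseteq\mathbb{C}P_0$ for all $n<L$, with $\Gamma(n)$ as in the context). Then the Schrieffer–Wolff effective Hamiltonian coefficients satisfy $H_{\mathrm{eff},1}=P_0VP_0\in\mathbb{C}P_0$ and $H_{\mathrm{eff},q}\in\mathbb{C}P_0$ for all $2\le q<L$ (so the effective Hamiltonian $H_{\mathrm{eff}}^{(n)}=E_0P_0+\sum_{q=1}^n\epsilon^qH_{\mathrm{eff},q}$ is proportional to $P_0$ for all $n<L$), and $$H_{\mathrm{eff},L}\in P_0(VG)^{L-1}VP_0+\mathbb{C}P_0,$$ where $(VG)^{L-1}V$ contains $L$ factors of $V$.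
   Context: Notation. $\Gamma(n)$ is the linear span of operators $Z_0VZ_1V\cdots Z_{n-1}VZ_n$ with each $Z_j\in\{P_0,Q_0\}\cup\{G^m:m\in\mathbb{N}\}$. Set $V_{\mathrm d}=P_0VP_0+Q_0VQ_0$, $V_{\mathrm{od}}=P_0VQ_0+Q_0VP_0$, $\mathcal{L}(X)=P_0XG-GXP_0$, $\mathrm{ad}_S(X)=[S,X]$. Let $\beta_m$ be the Bernoulli numbers ($\beta_2=1/6$), $a_m=2^m\beta_m/m!$, and $b_{2n-1}=2(2^{2n}-1)\beta_{2n}/(2n)!$ (so $b_1=1/2$). Define recursively $S_1=\mathcal{L}(V_{\mathrm{od}})$, $S_2=-\mathcal{L}(\mathrm{ad}_{V_{\mathrm d}}(S_1))$, and for $n\ge 3$, $S_n=-\mathcal{L}(\mathrm{ad}_{V_{\mathrm d}}(S_{n-1}))+\sum_{j\ge1}a_{2j}\mathcal{L}(\hat S^{2j}(V_{\mathrm{od}})_{n-1})$, where $\hat S^k(V_{\mathrm{od}})_m=\sum_{n_1,\dots,n_k\ge1,\ \sum_r n_r=m}\mathrm{ad}_{S_{n_1}}\cdots\mathrm{ad}_{S_{n_k}}(V_{\mathrm{od}})$ (which is $0$ if $k>m$). The Schrieffer–Wolff effective Hamiltonian expansion is $H_{\mathrm{eff}}^{(n)}=H_0P_0+\epsilon P_0VP_0+\sum_{q=2}^n\epsilon^qH_{\mathrm{eff},q}$ with $H_{\mathrm{eff},1}=P_0VP_0$ and $H_{\mathrm{eff},q}=\sum_{1\le j\le\lfloor q/2\rfloor}b_{2j-1}P_0\hat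 S^{2j-1}(V_{\mathrm{od}})_{q-1}P_0$ for $q\ge2$. *)

(* Defs.v *)
(* operators on a finite-dimensional Hilbert space are
   N x N complex matrices, with scalars in algC (algebraic complex numbers,
   a numClosedFieldType with conjugation x^* ). *)
From HB Require Import structures.
From mathcomp Require Import all_boot all_order all_algebra all_field.
Set Implicit Arguments. Unset Strict Implicit. Unset Printing Implicit Defensive.
Import Order.TTheory GRing.Theory Num.Theory.
Local Open Scope ring_scope.

Section SW.
Variable N : nat.
Notation M := 'M[algC]_N.

Definition adjointmx (A : M) : M := (map_mx (fun x : algC => x^*) A)^T.
Definition is_hermitian_op (A : M) : Prop := adjointmx A = A.

Definition mxpow (A : M) (k : nat) : M := iter k (fun B => A *m B) 1%:M.

(* Bernoulli numbers: beta_0 = 1, sum_{k<=m} C(m+1,k) beta_k = 0 for m >= 1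
   (beta_1 = -1/2, beta_2 = 1/6; only even indices are used below). *)
Fixpoint bern_list (m : nat) : seq algC :=
  match m with
  | 0 => [:: 1]
  | m'.+1 =>
      let s := bern_list m' in
      rcons s (- (m'.+2)%:R^-1 *
               \sum_(k < m'.+1) ('C(m'.+2, k))%:R * s`_k)
  end.
Definition bernoulli (m : nat) : algC := (bern_list m)`_m.

Definition acoef (m : nat) : algC := 2 ^+ m * bernoulli m / (m`!)%:R.
(* bcoef n = b_{2n-1} = 2 (2^{2n} - 1) beta_{2n} / (2n)! *)
Definition bcoef (n : nat) : algC :=
  2 * (2 ^+ (2 * n) - 1) * bernoulli (2 * n) / ((2 * n)`!)%:R.

Variables (P0 G V : M).
Definition Q0 : M := 1%:M - P0.
Definition Vd : M := P0 *m V *m P0 + Q0 *m V *m Q0.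
Definition Vod : M := P0 *m V *m Q0 + Q0 *m V *m P0.
Definition Lsw (X : M) : M := P0 *m X *m G - G *m X *m P0.
Definition admx (S X : M) : M := S *m X - X *m S.

(* hatS S k m = sum over n_1..n_k >= 1 with n_1+..+n_k = m of
   ad_{S n_1} ... ad_{S n_k} (Vod) *)
Fixpoint hatS (S : nat -> M) (k m : nat) : M :=
  match k with
  | 0 => if m == 0%N then Vod else 0
  | k'.+1 => \sum_(1 <= n1 < m.+1) admx (S n1) (hatS S k' (m - n1))
  end.

Definition Sof (s : seq M) (i : nat) : M := nth 0 s i.-1.

(* S_n computed from s = [:: S_1; ...; S_(n-1)] *)
Definition Snext (s : seq M) (n : nat) : M :=
  if n == 1%N then Lsw Vod
  else - Lsw (admx Vd (Sof s n.-1))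
       + \sum_(1 <= j < n) acoef (2 * j) *: Lsw (hatS (Sof s) (2 * j) n.-1).

Fixpoint Slist (n : nat) : seq M :=
  match n with
  | 0 => [::]
  | n'.+1 => rcons (Slist n') (Snext (Slist n') n'.+1)
  end.

Definition Ssw (n : nat) : M := Sof (Slist n) n.

(* H_eff,q for q >= 2 *)
Definition Heff (q : nat) : M :=
  \sum_(1 <= j < (q./2).+1)
     bcoef j *: (P0 *m hatS Ssw (2 * j).-1 q.-1 *m P0).

Definition isZ (Z : M) : Prop :=
  Z = P0 \/ Z = Q0 \/ exists m, (0 < m)%N /\ Z = mxpow G m.

Definition chain (zs : seq M) : M :=
  foldl (fun acc Z => acc *m Z *m V) (P0 *m V) zs *m P0.
End SW.

(* Main.v *)
Require Import Defs.
From HB Require Import structures.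
From mathcomp Require Import all_boot all_order all_algebra all_field.
From mathcomp Require Import zify ring.
Set Implicit Arguments. Unset Strict Implicit. Unset Printing Implicit Defensive.
Import Order.TTheory GRing.Theory Num.Theory.
Local Open Scope ring_scope.

Section Words.
Variable N : nat.
Local Notation M := 'M[algC]_N.
Variables (P0 G V : M).
Hypothesis hPP : P0 *m P0 = P0.
Hypothesis hQG : Q0 P0 *m G = G.
Hypothesis hGQ : G *m Q0 P0 = G.

Lemma subr_self (x y : M) : x - y = x -> y = 0.
Proof. move=> h; by rewrite -[y]opprK -(addKr x (- y)) h addNr oppr0. Qed.

Lemma hPG : P0 *m G = 0.
Proof. apply: (subr_self (x:=G)); by rewrite -{1}(mul1mx G) -mulmxBl. Qed.
Lemma hGP : G *m P0 = 0.
Proof. apply: (subr_self (x:=G)); by rewrite -{1}(mulmx1 G) -mulmxBr. Qed.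
Lemma hPQ : P0 *m Q0 P0 = 0.
Proof. by rewrite /Q0 mulmxBr mulmx1 hPP subrr. Qed.
Lemma hQP : Q0 P0 *m P0 = 0.
Proof. by rewrite /Q0 mulmxBl mul1mx hPP subrr. Qed.
Lemma hQQ : Q0 P0 *m Q0 P0 = Q0 P0.
Proof. by rewrite {1}/Q0 mulmxBl mul1mx hPQ subr0. Qed.

Local Notation gp := (mxpow G).
Lemma gpS m : gp m.+1 = G *m gp m. Proof. by []. Qed.
Lemma gpSr m : gp m.+1 = gp m *m G.
Proof. elim: m => [|m IH]; first by rewrite /mxpow /= mulmx1 mul1mx.
by rewrite [LHS]gpS {1}IH mulmxA -gpS. Qed.
Lemma gp1 : gp 1 = G. Proof. by rewrite /mxpow /= mulmx1. Qed.
Lemma gpD a b : gp a *m gp b = gp (a + b).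
Proof. elim: a => [|a IH]; first by rewrite /mxpow /= mul1mx.
by rewrite gpS -mulmxA IH. Qed.
Lemma hPgp m : P0 *m gp m.+1 = 0. Proof. by rewrite gpS mulmxA hPG mul0mx. Qed.
Lemma hgpP m : gp m.+1 *m P0 = 0. Proof. by rewrite gpSr -mulmxA hGP mulmx0. Qed.
Lemma hQgp m : Q0 P0 *m gp m.+1 = gp m.+1. Proof. by rewrite gpS mulmxA hQG. Qed.
Lemma hgpQ m : gp m.+1 *m Q0 P0 = gp m.+1. Proof. by rewrite gpSr -mulmxA hGQ. Qed.

Local Notation isZ := (isZ P0 G).

Lemma isZG : isZ G. Proof. right; right; exists 1%N; by rewrite gp1. Qed.
Lemma isZP : isZ P0. Proof. by left. Qed.
Lemma isZQ : isZ (Q0 P0). Proof. by right; left. Qed.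

Lemma Zmul x y : isZ x -> isZ y -> x *m y = 0 \/ isZ (x *m y).
Proof.
move=> [->|[->|[m [hm ->]]]] [->|[->|[m' [hm' ->]]]];
  try (case: m hm => // m _); try (case: m' hm' => // m' _).
- by right; rewrite hPP; left.
- by left; rewrite hPQ.
- by left; rewrite hPgp.
- by left; rewrite hQP.
- by right; rewrite hQQ; right; left.
- by right; rewrite hQgp; right; right; exists m'.+1.
- by left; rewrite hgpP.
- by right; rewrite hgpQ; right; right; exists m.+1.
- by right; rewrite gpD; right; right; exists (m.+1 + m'.+1)%N.
Qed.

Lemma ZP0l x : isZ x -> P0 *m x = P0 \/ P0 *m x = 0.
Proof. move=> [->|[->|[m [hm ->]]]]; [by left | by right; rewrite hPQ|].
case: m hm => // m _; by right; rewrite hPgp. Qed.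
Lemma ZP0r x : isZ x -> x *m P0 = P0 \/ x *m P0 = 0.
Proof. move=> [->|[->|[m [hm ->]]]]; [by left | by right; rewrite hQP|].
case: m hm => // m _; by right; rewrite hgpP. Qed.


Fixpoint ev (l : seq M) : M :=
  match l with
  | [::] => 0
  | z :: l' => if l' is [::] then z else z *m V *m ev l'
  end.

Lemma ev_consN z l : l != [::] -> ev (z :: l) = z *m V *m ev l.
Proof. by case: l. Qed.

Lemma rcons_neq (s : seq M) x : rcons s x != [::]. Proof. by case: s. Qed.

Lemma ev_mull x y t : x *m ev (y :: t) = ev (x *m y :: t).
Proof. by case: t => [|a t] //=; rewrite !mulmxA. Qed.

Lemma ev_mulr s x y : ev (rcons s x) *m y = ev (rcons s (x *m y)).
Proof.
elim: s => [//|z s IH].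
change (ev (z :: rcons s x) *m y = ev (z :: rcons s (x *m y))).
rewrite !ev_consN ?rcons_neq //.
by rewrite -mulmxA IH.
Qed.

Lemma ev_cat s x y t : ev (rcons s x) *m ev (y :: t) = ev (s ++ (x *m y) :: t).
Proof.
elim: s => [|z s IH]; first by rewrite /= ev_mull.
change (ev (z :: rcons s x) *m ev (y :: t) = ev (z :: (s ++ x *m y :: t))).
rewrite [ev (z :: rcons s x)]ev_consN ?rcons_neq // -mulmxA IH.
rewrite ev_consN //; by case: s {IH}.
Qed.

Lemma ev_0 l : 0 \in l -> ev l = 0.
Proof.
elim: l => [|z l IH] //=; rewrite inE => /orP [/eqP <-|h].
  by case: l {IH} => //= *; rewrite !mul0mx.
case: l IH h => // a l IH h; by rewrite IH // mulmx0.
Qed.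

Definition allZ (l : seq M) := forall z, z \in l -> isZ z.

Definition Gw n w := exists l, [/\ allZ l, size l = n.+1 & w = ev l].
Definition Dw n w := exists l, [/\ allZ l, size l = n.+1,
   (exists i, (0 < i < n)%N /\ nth 0 l i = P0) & w = ev l].

Inductive span (P : M -> Prop) : M -> Prop :=
| span0 : span P 0
| spanW w : P w -> span P w
| spanD x y : span P x -> span P y -> span P (x + y)
| spanZ c x : span P x -> span P (c *: x).

Lemma spanN P x : span P x -> span P (- x).
Proof. move=> h; rewrite -scaleN1r; exact: spanZ. Qed.
Lemma spanB P x y : span P x -> span P y -> span P (x - y).
Proof. move=> hx hy; apply: spanD => //; exact: spanN. Qed.
Lemma span_mono (P Q : M -> Prop) x : (forall w, P w -> Q w) -> span P x -> span Q x.
Proof. move=> hPQ; elim=> *; by [apply: span0|apply: spanW; auto|apply: spanD|apply: spanZ]. Qed.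
Lemma span_span P x : span (span P) x -> span P x.
Proof. elim=> *; by [apply: span0| |apply: spanD|apply: spanZ]. Qed.

Lemma span_mul (P Q R : M -> Prop) x y :
  (forall a b, P a -> Q b -> span R (a *m b)) -> span P x -> span Q y -> span R (x *m y).
Proof.
move=> H hx; elim: hx y => [|a Pa|x1 x2 _ IH1 _ IH2|c x1 _ IH] y hy.
- by rewrite mul0mx; apply: span0.
- elim: hy => [|b Qb|y1 y2 _ IH1 _ IH2|c y1 _ IH].
  + by rewrite mulmx0; apply: span0.
  + exact: H.
  + rewrite mulmxDr; exact: spanD.
  + rewrite -scalemxAr; exact: spanZ.
- rewrite mulmxDl; apply: spanD; auto.
- rewrite -scalemxAl; apply: spanZ; auto.
Qed.

Lemma allZ_cat s t : allZ s -> allZ t -> allZ (s ++ t).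
Proof. move=> hs ht z; rewrite mem_cat => /orP[]; auto. Qed.
Lemma allZ_cons z s : isZ z -> allZ s -> allZ (z :: s).
Proof. move=> hz hs w; rewrite inE => /orP[/eqP->|]; auto. Qed.
Lemma allZ_rcons s z : allZ (rcons s z) -> allZ s /\ isZ z.
Proof. move=> h; split; [move=> w hw|]; apply: h; by rewrite mem_rcons inE ?hw ?orbT ?eqxx. Qed.
Lemma allZ_consI z s : allZ (z :: s) -> isZ z /\ allZ s.
Proof. move=> h; split; [|move=> w hw]; apply: h; by rewrite inE ?hw ?orbT ?eqxx. Qed.

Lemma Gw_Gw a b w1 w2 : Gw a w1 -> Gw b w2 -> span (Gw (a + b)) (w1 *m w2).
Proof.
move=> [l1 [h1 s1 ->]] [l2 [h2 s2 ->]].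
case/lastP: l1 h1 s1 => // s x h1 s1.
case: l2 h2 s2 => // y t h2 s2.
case: (allZ_rcons h1) => hs hx; case: (allZ_consI h2) => hy ht.
rewrite ev_cat; case: (Zmul hx hy) => hxy.
  by rewrite ev_0 ?mem_cat ?inE ?hxy ?eqxx ?orbT //; apply: span0.
apply: spanW; exists (s ++ x *m y :: t); split => //.
- by apply: allZ_cat => //; apply: allZ_cons.
- move: s1 s2; rewrite size_rcons size_cat /= => -[->] -[->]; by rewrite addnS.
Qed.


Lemma Dw_Gw a b w1 w2 : Dw a w1 -> Gw b w2 -> span (Dw (a + b)) (w1 *m w2).
Proof.
move=> [l1 [h1 s1 [i [hi hn]] ->]] [l2 [h2 s2 ->]].
case/lastP: l1 h1 s1 hn => // s x h1 s1 hn.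
case: l2 h2 s2 => // y t h2 s2.
case: (allZ_rcons h1) => hs hx; case: (allZ_consI h2) => hy ht.
move: s1 s2; rewrite size_rcons /= => -[s1] -[s2].
rewrite ev_cat; case: (Zmul hx hy) => hxy.
  by rewrite ev_0 ?mem_cat ?inE ?hxy ?eqxx ?orbT //; apply: span0.
apply: spanW; exists (s ++ x *m y :: t); split => //.
- by apply: allZ_cat => //; apply: allZ_cons.
- by rewrite size_cat /= s1 s2 addnS.
- exists i; case/andP: hi => hi1 hi2; split.
    by rewrite hi1 /= (leq_trans hi2) ?leq_addr.
  by rewrite nth_cat s1 hi2 -hn nth_rcons s1 hi2.
Qed.

Lemma Gw_Dw a b w1 w2 : Gw a w1 -> Dw b w2 -> span (Dw (a + b)) (w1 *m w2).
Proof.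
move=> [l1 [h1 s1 ->]] [l2 [h2 s2 [i [hi hn]] ->]].
case/lastP: l1 h1 s1 => // s x h1 s1.
case: l2 h2 s2 hn => // y t h2 s2 hn.
case: (allZ_rcons h1) => hs hx; case: (allZ_consI h2) => hy ht.
move: s1 s2; rewrite size_rcons /= => -[s1] -[s2].
rewrite ev_cat; case: (Zmul hx hy) => hxy.
  by rewrite ev_0 ?mem_cat ?inE ?hxy ?eqxx ?orbT //; apply: span0.
apply: spanW; exists (s ++ x *m y :: t); split => //.
- by apply: allZ_cat => //; apply: allZ_cons.
- by rewrite size_cat /= s1 s2 addnS.
- exists (a + i)%N; case/andP: hi => hi1 hi2; split.
    by rewrite ltn_add2l hi2 andbT (leq_trans hi1) ?leq_addl.
  rewrite nth_cat s1 ltnNge leq_addr /= addKn.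
  by case: i hi1 hi2 hn.
Qed.

Lemma Dw_Gw' n w : Dw n w -> Gw n w.
Proof. by move=> [l [h1 h2 _ h3]]; exists l. Qed.

Lemma Gw1 z : isZ z -> Gw 0 z.
Proof. move=> hz; exists [:: z]; split => //; by move=> w; rewrite inE => /eqP ->. Qed.

Definition cong n x y := span (Dw n) (x - y).

Lemma cong_refl n x : cong n x x.
Proof. rewrite /cong subrr; exact: span0. Qed.
Lemma cong_sym n x y : cong n x y -> cong n y x.
Proof. move=> h; rewrite /cong -opprB; exact: spanN h. Qed.
Lemma cong_trans n x y z : cong n x y -> cong n y z -> cong n x z.
Proof. move=> h1 h2; rewrite /cong; have ->: x - z = (x - y) + (y - z) by rewrite addrA subrK.
exact: spanD. Qed.
Lemma cong_add n x y x' y' : cong n x x' -> cong n y y' -> cong n (x + y) (x' + y').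
Proof. move=> h1 h2; rewrite /cong opprD addrACA; exact: spanD. Qed.
Lemma cong_opp n x x' : cong n x x' -> cong n (- x) (- x').
Proof. move=> h; rewrite /cong; have ->: - x - - x' = - (x - x') by rewrite opprB opprK addrC.
exact: spanN h. Qed.
Lemma cong_sub n x y x' y' : cong n x x' -> cong n y y' -> cong n (x - y) (x' - y').
Proof. move=> h1 h2; apply: cong_add => //; exact: cong_opp. Qed.
Lemma cong_scale n c x x' : cong n x x' -> cong n (c *: x) (c *: x').
Proof. move=> h; rewrite /cong -scalerBr; exact: spanZ. Qed.
Lemma cong0 n x : span (Dw n) x -> cong n x 0.
Proof. by rewrite /cong subr0. Qed.
Lemma cong0' n x : cong n x 0 -> span (Dw n) x.
Proof. by rewrite /cong subr0. Qed.
Lemma cong_addl n x y : cong n x 0 -> cong n (x + y) y.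
Proof. move=> h; rewrite -{2}[y]add0r; apply: cong_add => //; exact: cong_refl. Qed.

Lemma cong_mull a b n z x y : span (Gw a) z -> cong b x y -> (a + b)%N = n ->
  cong n (z *m x) (z *m y).
Proof. move=> hz h <-; rewrite /cong -mulmxBr; apply: span_mul hz h; exact: Gw_Dw. Qed.
Lemma cong_mulr a b n z x y : cong a x y -> span (Gw b) z -> (a + b)%N = n ->
  cong n (x *m z) (y *m z).
Proof. move=> h hz <-; rewrite /cong -mulmxBl; apply: span_mul h hz; exact: Dw_Gw. Qed.

Lemma cong_Gw n x y : cong n x y -> span (Gw n) y -> span (Gw n) x.
Proof. move=> h hy; rewrite -(subrK y x); apply: spanD => //.
apply: span_mono h; exact: Dw_Gw'. Qed.

Lemma span_Gw_mul a b n x y : span (Gw a) x -> span (Gw b) y -> (a + b)%N = n ->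
  span (Gw n) (x *m y).
Proof. move=> hx hy <-; apply: span_mul hx hy; exact: Gw_Gw. Qed.

Lemma cong_mul2 a b n x x' y y' : cong a x x' -> cong b y y' ->
  span (Gw a) x' -> span (Gw b) y -> (a + b)%N = n -> cong n (x *m y) (x' *m y').
Proof.
move=> h1 h2 g1 g2 e; apply: (cong_trans (y := x' *m y)).
  exact: cong_mulr h1 g2 e.
exact: cong_mull g1 h2 e.
Qed.


Definition gw x k y := ev (x :: rcons (nseq k G) y).

Lemma allZ_gw x k y : isZ x -> isZ y -> allZ (x :: rcons (nseq k G) y).
Proof.
move=> hx hy z; rewrite inE mem_rcons inE => /or3P[/eqP->|/eqP->|] //.
by move/nseqP=> [-> _]; exact: isZG.
Qed.

Lemma gw_Gw x k y : isZ x -> isZ y -> span (Gw k.+1) (gw x k y).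
Proof. move=> hx hy; apply: spanW; exists (x :: rcons (nseq k G) y); split => //.
  exact: allZ_gw. by rewrite /= size_rcons size_nseq. Qed.

Lemma gw_mull z x k y : z *m gw x k y = gw (z *m x) k y.
Proof. exact: ev_mull. Qed.
Lemma gw_mulr x k y z : gw x k y *m z = gw x k (y *m z).
Proof. exact: (ev_mulr (x :: nseq k G)). Qed.
Lemma gw0l k y : gw 0 k y = 0.
Proof. by rewrite /gw ev_0 // inE eqxx. Qed.
Lemma gw0r x k : gw x k 0 = 0.
Proof. by rewrite /gw ev_0 // inE mem_rcons inE eqxx orbT. Qed.
Lemma gwE x y : gw x 0 y = x *m V *m y. Proof. by []. Qed.

Lemma gwM x a y x' b y' : gw x a y *m gw x' b y' =
   ev ((x :: nseq a G) ++ (y *m x') :: rcons (nseq b G) y').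
Proof. exact: (ev_cat (x :: nseq a G)). Qed.

Lemma gwM0 x a y x' b y' : y *m x' = 0 -> gw x a y *m gw x' b y' = 0.
Proof. move=> h; rewrite gwM h ev_0 // mem_cat; apply/orP; right; exact: mem_head. Qed.

Lemma gwMG x a y x' b y' : y *m x' = G -> gw x a y *m gw x' b y' = gw x (a + b.+1) y'.
Proof. move=> h; rewrite gwM h /gw /= -rcons_cons -rcons_cat; by rewrite nseqD. Qed.

Lemma gwMP x a y x' b y' n : isZ x -> isZ y -> isZ x' -> isZ y' -> y *m x' = P0 ->
  (a.+1 + b.+1)%N = n -> cong n (gw x a y *m gw x' b y') 0.
Proof.
move=> hx hy hx' hy' h <-; apply: cong0; apply: spanW; rewrite gwM h.
exists ((x :: nseq a G) ++ P0 :: rcons (nseq b G) y'); split => //.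
- apply: allZ_cat; first by move: (allZ_gw (k:=a) hx hy) => /allZ_consI[? hh];
    apply: allZ_cons => // z hz; apply: hh; rewrite mem_rcons inE hz orbT.
  exact: allZ_gw isZP hy'.
- by rewrite size_cat /= size_rcons !size_nseq addnS.
- exists a.+1; split; first by rewrite /= addSn ltnS addnS leq_addr.
  by rewrite nth_cat /= size_nseq ltnn subnn.
Qed.

Lemma gw_pow x k y : gw x k y = x *m mxpow (V *m G) k *m V *m y.
Proof.
elim: k x => [|k IH] x; first by rewrite gwE /mxpow /= mulmx1.
have pS : mxpow (V *m G) k.+1 = V *m G *m mxpow (V *m G) k by [].
rewrite /gw [nseq k.+1 G]/= ev_consN // -/(gw G k y) IH pS !mulmxA.
by []. Qed.


Local Notation Vd := (Vd P0 V).
Local Notation Vod := (Vod P0 V).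
Local Notation Lsw := (Lsw P0 G).

Lemma VdE : Vd = gw P0 0 P0 + gw (Q0 P0) 0 (Q0 P0). Proof. by []. Qed.
Lemma VodE : Vod = gw P0 0 (Q0 P0) + gw (Q0 P0) 0 P0. Proof. by []. Qed.
Lemma Vd_Gw : span (Gw 1) Vd.
Proof. rewrite VdE; apply: spanD; apply: gw_Gw; by [exact: isZP|exact: isZQ]. Qed.
Lemma Vod_Gw : span (Gw 1) Vod.
Proof. rewrite VodE; apply: spanD; apply: gw_Gw; by [exact: isZP|exact: isZQ]. Qed.

Lemma LswD x y : Lsw (x + y) = Lsw x + Lsw y.
Proof. by rewrite /Lsw mulmxDr mulmxDl mulmxDr mulmxDl opprD addrACA. Qed.
Lemma LswN x : Lsw (- x) = - Lsw x.
Proof. by rewrite /Lsw mulmxN mulNmx mulmxN mulNmx opprB opprK addrC. Qed.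
Lemma LswB x y : Lsw (x - y) = Lsw x - Lsw y.
Proof. by rewrite LswD LswN. Qed.
Lemma LswZ c x : Lsw (c *: x) = c *: Lsw x.
Proof. by rewrite /Lsw -!scalemxAr -!scalemxAl scalerBr. Qed.
Lemma Lsw_gw x k y : Lsw (gw x k y) = gw (P0 *m x) k (y *m G) - gw (G *m x) k (y *m P0).
Proof. by rewrite /Lsw gw_mull gw_mulr gw_mull gw_mulr. Qed.

Lemma P0_Gw : span (Gw 0) P0. Proof. apply: spanW; apply: Gw1; exact: isZP. Qed.
Lemma G_Gw : span (Gw 0) G. Proof. apply: spanW; apply: Gw1; exact: isZG. Qed.

Lemma cong_Lsw n x y : cong n x y -> cong n (Lsw x) (Lsw y).
Proof.
move=> h; rewrite /Lsw; apply: cong_sub.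
  apply: (cong_mulr _ G_Gw (addn0 n)); exact: (cong_mull P0_Gw h).
apply: (cong_mulr _ P0_Gw (addn0 n)); exact: (cong_mull G_Gw h).
Qed.

Lemma Lsw_span n x : span (Gw n) x -> span (Gw n) (Lsw x).
Proof.
move=> h; rewrite /Lsw; apply: spanB.
  apply: (span_Gw_mul _ G_Gw (addn0 n)); exact: (span_Gw_mul P0_Gw h).
apply: (span_Gw_mul _ P0_Gw (addn0 n)); exact: (span_Gw_mul G_Gw h).
Qed.

Definition T k := gw P0 k G - gw G k P0.
Definition W k := gw P0 k P0.

Lemma T_Gw k : span (Gw k.+1) (T k).
Proof. apply: spanB; apply: gw_Gw; by [exact: isZP|exact: isZG]. Qed.
Lemma W_Gw k : span (Gw k.+1) (W k).
Proof. apply: gw_Gw; exact: isZP. Qed.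

Ltac congtac := repeat first [apply: cong_refl | assumption | apply: cong_sub | apply: cong_add | apply: cong_opp].

Lemma stepT k : cong k.+2 (Lsw (admx Vd (T k))) (- T k.+1).
Proof.
have e1 : cong k.+2 (admx Vd (T k)) (- gw (Q0 P0) k.+1 P0 - gw P0 k.+1 (Q0 P0)).
  rewrite /admx VdE /T mulmxDl !mulmxBr mulmxBl !mulmxDr.
  rewrite (gwM0 _ _ _ _ hPG) (gwM0 _ _ _ _ hQP) (gwMG _ _ _ _ hQG).
  rewrite (gwM0 _ _ _ _ hGP) (gwMG _ _ _ _ hGQ) (gwM0 _ _ _ _ hPQ) addn1.
  have h1 : cong k.+2 (gw P0 0 P0 *m gw P0 k G) 0.
    apply: gwMP => //; by [exact: isZP|exact: isZG].
  have h2 : cong k.+2 (gw G k P0 *m gw P0 0 P0) 0.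
    apply: gwMP => //; by [exact: isZP|exact: isZG|rewrite addn1].
  apply: (cong_trans (y := 0 - 0 + (0 - gw (Q0 P0) k.+1 P0) - (0 + gw P0 k.+1 (Q0 P0) - (0 + 0)))).
    congtac.
  by rewrite !subr0 !add0r subr0; exact: cong_refl.
apply: cong_trans (cong_Lsw e1) _.
rewrite LswB LswN !Lsw_gw hPQ hPG hQG hGQ hGP hPP hQP !gw0l /T.
rewrite !subr0 sub0r opprK opprB; exact: cong_refl.
Qed.


Local Notation Ssw := (Ssw P0 G V).
Local Notation Slist := (Slist P0 G V).
Local Notation hatS := (hatS P0 V).

Lemma I1_base : cong 1 (Ssw 1) (T 0).
Proof.
have -> : Ssw 1 = Lsw Vod by [].
rewrite VodE LswD !Lsw_gw hPP hQG hGP hQP hPQ hPG hGQ !gw0l subr0 add0r.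
exact: cong_refl.
Qed.

Lemma size_Slist n : size (Slist n) = n.
Proof. elim: n => //= n IH; by rewrite size_rcons IH. Qed.

Lemma SswE n : Ssw n.+1 = Snext P0 G V (Slist n) n.+1.
Proof. by rewrite /Defs.Ssw /Sof /= nth_rcons size_Slist ltnn eqxx. Qed.

Lemma SlistS n : Slist n.+1 = rcons (Slist n) (Snext P0 G V (Slist n) n.+1).
Proof. by []. Qed.

Lemma Slist_prefix d i : nth 0 (Slist (i.+1 + d)) i = nth 0 (Slist i.+1) i.
Proof.
elim: d => [|d IH]; first by rewrite addn0.
by rewrite addnS SlistS nth_rcons size_Slist -addSn ltn_addr // IH.
Qed.

Lemma Sof_Slist n i : (0 < i <= n)%N -> Sof (Slist n) i = Ssw i.
Proof.
case: i => // i /= hi; rewrite /Defs.Ssw /Sof /= -(subnKC hi).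
exact: Slist_prefix.
Qed.

Lemma hatS_ext S S' k m : (forall i, (0 < i <= m)%N -> S i = S' i) ->
  hatS S k m = hatS S' k m.
Proof.
elim: k m => [//|k IH] m h /=.
apply: eq_big_nat => i /andP[hi1 hi2].
rewrite h ?hi1 // IH // => j /andP[hj1 hj2]; apply: h.
by rewrite hj1 (leq_trans hj2) // leq_subr.
Qed.

Lemma cong_admx a b n S S' X X' : cong a S S' -> cong b X X' ->
  span (Gw a) S' -> span (Gw b) X' -> (a + b)%N = n ->
  cong n (admx S X) (admx S' X').
Proof.
move=> hS hX gS gX e; rewrite /admx; apply: cong_sub.
  apply: cong_mul2 hS hX gS (cong_Gw hX gX) e.
apply: cong_mul2 hX hS gX (cong_Gw hS gS) _; by rewrite addnC.
Qed.

Lemma hatS1 k : cong k.+1 (Ssw k.+1) (T k) ->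
  cong k.+2 (hatS Ssw 1 k.+1) (W k.+1 + W k.+1).
Proof.
move=> hI.
have -> : hatS Ssw 1 k.+1 = admx (Ssw k.+1) Vod.
  rewrite /= big_nat_recr //= subnn /= big1_seq ?add0r //.
  move=> i /andP[_]; rewrite mem_index_iota => /andP[_ hi].
  rewrite /admx /=; case: eqP => [/eqP|_]; first by rewrite subn_eq0 leqNgt hi.
  by rewrite mulmx0 mul0mx subrr.
apply: cong_trans (cong_admx hI (cong_refl 1 Vod) (T_Gw k) Vod_Gw (addn1 _)) _.
rewrite /admx VodE /T mulmxBl mulmxDl !mulmxBr !mulmxDr.
rewrite (gwM0 _ _ _ _ hGP) (gwMG _ _ _ _ hGQ) (gwM0 _ _ _ _ hPQ).
rewrite (gwM0 _ _ _ _ hQP) (gwMG _ _ _ _ hQG) (gwM0 _ _ _ _ hPG) addn1 add0n.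
have h1 : cong k.+2 (gw G k P0 *m gw P0 0 (Q0 P0)) 0.
  apply: gwMP => //; by [exact: isZP|exact: isZG|exact: isZQ|rewrite addn1].
have h2 : cong k.+2 (gw (Q0 P0) 0 P0 *m gw P0 k G) 0.
  apply: gwMP => //; by [exact: isZP|exact: isZG|exact: isZQ].
apply: (cong_trans (y := 0 + W k.+1 - (0 + 0) - (0 - W k.+1 + (0 - 0)))).
  rewrite /W; congtac.
rewrite !subr0 !add0r addr0 opprK subr0; exact: cong_refl.
Qed.

Lemma TW0 j b c : cong (j.+1 + b.+1) (admx (T j) (c *: W b)) 0.
Proof.
rewrite /admx -scalemxAr -scalemxAl -scalerBr -(scaler0 _ c); apply: cong_scale.
rewrite /T /W mulmxBl mulmxBr (gwM0 _ _ _ _ hGP) (gwM0 _ _ _ _ hPG).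
have h1 : cong (j.+1 + b.+1) (gw G j P0 *m gw P0 b P0) 0.
  apply: gwMP => //; by [exact: isZP|exact: isZG].
have h2 : cong (j.+1 + b.+1) (gw P0 b P0 *m gw P0 j G) 0.
  apply: gwMP => //; by [exact: isZP|exact: isZG|rewrite addnC].
apply: (cong_trans (y := 0 - 0 - (0 - 0))); first by congtac.
rewrite !subr0; exact: cong_refl.
Qed.


Lemma hatS_good M : (forall j, (j < M)%N -> cong j.+1 (Ssw j.+1) (T j)) ->
  forall kk m, (0 < kk)%N -> (m <= M)%N ->
  exists c, cong m.+1 (hatS Ssw kk m) (c *: W m) /\ ((1 < kk)%N -> c = 0).
Proof.
move=> HI; elim => [//|k IHk] m _ hm.
case: k IHk => [_|k IHk].
  case: m hm => [_|m hm].
    exists 0; split => //; rewrite scale0r.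
    have -> : hatS Ssw 1 0 = 0 by rewrite /= big_geq.
    exact: cong_refl.
  exists 2; split => //; rewrite scaler_nat mulr2n.
  by apply: hatS1; apply: HI.
exists 0; split => //; rewrite scale0r.
change (cong m.+1 (\sum_(1 <= n1 < m.+1) admx (Ssw n1) (hatS Ssw k.+1 (m - n1))) 0).
rewrite big_seq; apply: (big_ind (fun x => cong m.+1 x 0)).
- exact: cong_refl.
- by move=> x y hx hy; rewrite -(addr0 0); exact: cong_add hx hy.
move=> i; rewrite mem_index_iota => /andP[hi1 hi2].
case: i hi1 hi2 => // j _ hj.
have [c [hc _]] := IHk (m - j.+1)%N isT (leq_trans (leq_subr _ _) hm).
have e : (j.+1 + (m - j.+1).+1)%N = m.+1 by rewrite addnS subnKC.
have hj' : (j < M)%N by rewrite (leq_trans _ hm).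
apply: cong_trans (cong_admx (HI j hj') hc (T_Gw j) (spanZ c (W_Gw _)) e) _.
rewrite -e; exact: TW0.
Qed.

Lemma Lsw0 : Lsw 0 = 0. Proof. by rewrite /Defs.Lsw !mulmx0 !mul0mx subrr. Qed.

Lemma I1_all k : cong k.+1 (Ssw k.+1) (T k).
Proof.
elim/ltn_ind: k => -[_|k IH]; first exact: I1_base.
rewrite SswE /Snext (_ : (k.+2 == 1)%N = false) //.
apply: (cong_trans (y := - (- T k.+1) + 0)); last by rewrite addr0 opprK; exact: cong_refl.
apply: cong_add.
  apply: cong_opp; apply: cong_trans (stepT k).
  apply: cong_Lsw; apply: (cong_admx (cong_refl 1 Vd) (IH k (ltnSn k)) Vd_Gw (T_Gw k)).
  by [].
rewrite big_seq; apply: (big_ind (fun x => cong k.+2 x 0)).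
- exact: cong_refl.
- by move=> x y hx hy; rewrite -(addr0 0); exact: cong_add hx hy.
move=> j; rewrite mem_index_iota => /andP[hj1 hj2].
rewrite (hatS_ext (S' := Ssw)); last by move=> i hi; apply: Sof_Slist.
rewrite -(scaler0 _ (acoef (2 * j))); apply: cong_scale; rewrite -Lsw0; apply: cong_Lsw.
have hpos : (0 < 2 * j)%N by rewrite muln_gt0.
have H : forall j0, (j0 < k.+1)%N -> cong j0.+1 (Ssw j0.+1) (T j0) by move=> j0 hj0; exact: IH.
have [c [hc hc0]] := hatS_good H hpos (leqnn k.+1).
have h2 : (1 < 2 * j)%N by lia.
by move: hc; rewrite hc0 // scale0r.
Qed.


Lemma foldl_ev zs : forall (X x y : M),
  foldl (fun acc Z => acc *m Z *m V) (X *m x *m V) zs *m y = X *m ev (x :: rcons zs y).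
Proof.
elim: zs => [|z zs IH] X x y; first by rewrite /= !mulmxA.
have -> : ev (x :: z :: rcons zs y) = x *m V *m ev (z :: rcons zs y) by [].
change (foldl (fun acc Z => acc *m Z *m V) (X *m x *m V *m z *m V) zs *m y = X *m (x *m V *m ev (z :: rcons zs y))).
by rewrite (IH (X *m x *m V)) !mulmxA.
Qed.

Lemma chainE zs : chain P0 V zs = ev (P0 :: rcons zs P0).
Proof. by rewrite /Defs.chain -{1}[P0]mul1mx foldl_ev mul1mx. Qed.

Definition CP (X : M) := exists c : algC, X = c *: P0.

Lemma CP0 : CP 0. Proof. by exists 0; rewrite scale0r. Qed.
Lemma CPD x y : CP x -> CP y -> CP (x + y).
Proof. by move=> [a ->] [b ->]; exists (a + b); rewrite scalerDl. Qed.
Lemma CPZ c x : CP x -> CP (c *: x).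
Proof. by move=> [a ->]; exists (c * a); rewrite scalerA. Qed.
Lemma CP_sum I r (P : pred I) (F : I -> M) : (forall i, P i -> CP (F i)) -> CP (\sum_(i <- r | P i) F i).
Proof. move=> h; apply: big_ind => //; [exact: CP0 | exact: CPD]. Qed.

Variable L : nat.
Hypothesis hch : forall (n : nat) (zs : seq M),
      (1 <= n < L)%N -> size zs = n.-1 -> (forall i, (i < size zs)%N -> isZ (nth 0 zs i)) ->
      exists c : algC, chain P0 V zs = c *: P0.

Lemma chain_Gw n w : (1 <= n < L)%N -> Gw n w -> CP (P0 *m w *m P0).
Proof.
move=> hn [l [hl sl ->]].
case: l hl sl => // x l' hl sl; case/lastP: l' hl sl => [|zs y] hl sl.
  by move: sl hn => /= [<-].
case: (allZ_consI hl) => hx /allZ_rcons [hzs hy].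
rewrite ev_mull -rcons_cons ev_mulr rcons_cons.
case: (ZP0l hx) => ->; last by rewrite ev_0; [exact: CP0|rewrite inE eqxx].
case: (ZP0r hy) => ->; last by rewrite ev_0; [exact: CP0|rewrite inE mem_rcons inE eqxx !orbT].
rewrite -chainE; apply: (hch hn).
  by move: sl; rewrite /= size_rcons => -[<-].
by move=> i hi; apply: hzs; exact: mem_nth.
Qed.

Lemma chain_span n x : (1 <= n < L)%N -> span (Gw n) x -> CP (P0 *m x *m P0).
Proof.
move=> hn; elim => [|w hw|a b _ ha _ hb|c a _ ha].
- by rewrite mulmx0 mul0mx; exact: CP0.
- exact: chain_Gw hn hw.
- by rewrite mulmxDr mulmxDl; exact: CPD.
- by rewrite -scalemxAr -scalemxAl; exact: CPZ.
Qed.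

Lemma chain_Dw w : Dw L w -> CP (P0 *m w *m P0).
Proof.
move=> [l [hl sl [i [/andP[hi1 hi2] hn]] ->]].
have hil : (i < size l)%N by rewrite sl ltnS ltnW.
have : ev l = ev (rcons (take i l) P0) *m ev (P0 :: drop i.+1 l).
  by rewrite ev_cat hPP -hn -drop_nth // cat_take_drop.
move=> ->.
have hz1 : allZ (rcons (take i l) P0).
  move=> z; rewrite mem_rcons inE => /orP[/eqP->|h]; first exact: isZP.
  by apply: hl; exact: mem_take h.
have hz2 : allZ (P0 :: drop i.+1 l).
  move=> z; rewrite inE => /orP[/eqP->|h]; first exact: isZP.
  by apply: hl; exact: mem_drop h.
have g1 : Gw i (ev (rcons (take i l) P0)).
  exists (rcons (take i l) P0); split => //; by rewrite size_rcons size_take hil.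
have g2 : Gw (L - i) (ev (P0 :: drop i.+1 l)).
  exists (P0 :: drop i.+1 l); split => //; by rewrite /= size_drop sl subSS.
have b1 : (1 <= i < L)%N by rewrite hi1 hi2.
have b2 : (1 <= L - i < L)%N by lia.
have [c1 e1] := chain_Gw b1 g1.
have [c2 e2] := chain_Gw b2 g2.
have -> : P0 *m (ev (rcons (take i l) P0) *m ev (P0 :: drop i.+1 l)) *m P0 =
   (P0 *m ev (rcons (take i l) P0) *m P0) *m (P0 *m ev (P0 :: drop i.+1 l) *m P0).
  have ha : ev (rcons (take i l) P0) *m P0 = ev (rcons (take i l) P0) by rewrite ev_mulr hPP.
  have hb : P0 *m ev (P0 :: drop i.+1 l) = ev (P0 :: drop i.+1 l) by rewrite ev_mull hPP.
  by rewrite -{1}ha -{1}hb !mulmxA.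
rewrite e1 e2 -scalemxAl -scalemxAr hPP scalerA; by exists (c1 * c2).
Qed.

Lemma chainD x : span (Dw L) x -> CP (P0 *m x *m P0).
Proof.
elim => [|w hw|a b _ ha _ hb|c a _ ha].
- by rewrite mulmx0 mul0mx; exact: CP0.
- exact: chain_Dw hw.
- by rewrite mulmxDr mulmxDl; exact: CPD.
- by rewrite -scalemxAr -scalemxAl; exact: CPZ.
Qed.

End Words.

Lemma b1 : bcoef 1 + bcoef 1 = 1 :> algC.
Proof.
rewrite /bcoef /bernoulli /= !big_ord_recr !big_ord0 /= !add0r !(mul1n, muln1, mul0n) !bin0 bin1.
rewrite (_ : 2`! = 2)%N //.
by field.
Qed.

Lemma aux N (a b c : 'M[algC]_N) : a + b + c - a = b + c.
Proof. by rewrite addrAC [a + b]addrC addrK. Qed.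

Theorem theorem2 (N : nat) (H0 V P0 G : 'M[algC]_N) (E0 : algC) (L : nat) :
  (* H0, V Hermitian *)
  is_hermitian_op H0 -> is_hermitian_op V ->
  (* E0 is the ground energy (smallest eigenvalue) of H0 *)
  eigenvalue H0 E0 -> (forall l : algC, eigenvalue H0 l -> E0 <= l) ->
  (* P0 is the orthogonal projection onto the ground space ker (H0 - E0) *)
  P0 *m P0 = P0 -> is_hermitian_op P0 ->
  H0 *m P0 = E0 *: P0 ->
  (forall v : 'cV[algC]_N, H0 *m v = E0 *: v -> P0 *m v = v) ->
  (* G = Q0 (E0 I - H0)^{-1} Q0, the inverse taken on the range of Q0 *)
  Q0 P0 *m G = G -> G *m Q0 P0 = G ->
  G *m (E0%:M - H0) = Q0 P0 -> (E0%:M - H0) *m G = Q0 P0 ->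
  (2 <= L)%N ->
  (forall (n : nat) (zs : seq 'M[algC]_N),
      (1 <= n < L)%N -> size zs = n.-1 -> (forall i, (i < size zs)%N -> isZ P0 G (nth 0 zs i)) ->
      exists c : algC, chain P0 V zs = c *: P0) ->
  (exists c : algC, P0 *m V *m P0 = c *: P0) /\
  (forall q : nat, (2 <= q < L)%N -> exists c : algC, Heff P0 G V q = c *: P0) /\
  (exists c : algC,
      Heff P0 G V L = P0 *m mxpow (V *m G) L.-1 *m V *m P0 + c *: P0).
Proof.
move=> _ _ _ _ hPP _ _ _ hQG hGQ _ _ hL hch.
have HI : forall M j, (j < M)%N -> cong P0 G V j.+1 (Ssw P0 G V j.+1) (T P0 G V j).
  by move=> M j _; exact: I1_all.
split.
  have h1 : (1 <= 1 < L)%N by rewrite hL.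
  have h3 : forall i, (i < size ([::] : seq 'M[algC]_N))%N -> isZ P0 G (nth 0 [::] i) by [].
  have [c hc] := hch 1%N [::] h1 erefl h3.
  by exists c.
split.
  move=> q /andP[hq1 hq2].
  rewrite /Heff big_seq; apply: CP_sum => j; rewrite mem_index_iota => /andP[hj _].
  apply: CPZ.
  have hk : (0 < (2 * j).-1)%N by lia.
  have [c [hc _]] := hatS_good hPP hQG hGQ (HI q.-1) hk (leqnn q.-1).
  have hs := cong_Gw hc (spanZ c (W_Gw P0 G V _)).
  have hn : (1 <= q.-1.+1 < L)%N by rewrite prednK ?(leq_trans _ hq1).
  exact (chain_span hPP hQG hGQ hch hn hs).
case: L hL hch => [|[|l]] // _ hch.
have eW : P0 *m mxpow (V *m G) (l.+2).-1 *m V *m P0 = W P0 G V l.+1 by rewrite /W gw_pow.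
rewrite eW.
set h1 := hatS P0 V (Ssw P0 G V) 1 l.+1.
set Wl := W P0 G V l.+1.
have hd : cong P0 G V l.+2 h1 (Wl + Wl) := @hatS1 N P0 G V hPP hQG hGQ l (@I1_all N P0 G V hPP hQG hGQ l).
set d := h1 - (Wl + Wl).
have eh : h1 = (Wl + Wl) + d by rewrite /d addrC subrK.
have PWP : P0 *m Wl *m P0 = Wl by rewrite /Wl /W gw_mull gw_mulr hPP.
have eF : bcoef 1 *: (P0 *m h1 *m P0) = Wl + bcoef 1 *: (P0 *m d *m P0).
  rewrite eh mulmxDr mulmxDl scalerDr mulmxDr mulmxDl PWP.
  by rewrite scalerDr -scalerDl b1 scale1r.
have hC : CP P0 (Heff P0 G V l.+2 - Wl).
  rewrite /Heff big_ltn //.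
  rewrite (_ : ((2 * 1).-1 = 1)%N) // (_ : (l.+2).-1 = l.+1) // -/h1 eF aux.
  apply: CPD; first by apply: CPZ; exact (chainD hPP hQG hGQ hch hd).
  rewrite big_seq; apply: CP_sum => j; rewrite mem_index_iota => /andP[hj _].
  apply: CPZ.
  have hk : (0 < (2 * j).-1)%N by lia.
  have [c [hc hc0]] := hatS_good hPP hQG hGQ (HI l.+1) hk (leqnn l.+1).
  have h2 : (1 < (2 * j).-1)%N by lia.
  move: hc; rewrite hc0 // scale0r => hc.
  exact (chainD hPP hQG hGQ hch (cong0' hc)).
have [c hc] := hC; exists c.
by rewrite -hc addrC subrK.
Qed.
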